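(* Let $k$ be a field of characteristic zero, $A_1=k[t,\partial]$ the first Weyl algebra ($\partial t-t\partial=1$), $Q_1$ its quotient division ring, and let $I$ be a non-zero right ideal of $A_1$. Then there exists an element $f\in I$, unique up to multiplication by an element of $k^*$, such that the set of elements of $I$ of minimal $t$-degree (together with $0$) is exactly $f\,k[\partial]$. Likewise, there exists an element $e^*\in I^*$, unique up to multiplication by an element of $k^*$, such that the set of elements of $I^*$ of minimal $t$-degree (together with $0$) is exactly $k[\partial]\,e^*$.
   Context: $I^*$ denotes the dual of $I$ as a left $A_1$-module, identified with $\{u\in Q_1: uI\subseteq A_1\}$. The $t$-degree $\deg_t$ is the degree in $t$ coming from the inclusion $A_1\subset k(\partial)[t]$, extended to $Q_1$ (the quotient division ring of $k(\partial)[t]$) by $\deg_t(ab^{-1})=\deg_t a-\deg_t b$. *)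

(* Defs.v *)
From HB Require Import structures.
From mathcomp Require Import all_boot all_order all_algebra.
Set Implicit Arguments. Unset Strict Implicit. Unset Printing Implicit Defensive.
Import Order.TTheory GRing.Theory Num.Theory.
Local Open Scope ring_scope.

(* Setting: k a field, Q a k-algebra which is a division ring, containing
   elements t, d (d = "partial") generating the first Weyl algebra A_1,
   and such that Q is the (classical) quotient division ring of A_1. *)

Section Weyl.
Variables (k : fieldType) (Q : unitAlgType k) (t d : Q).

Definition division_ring := forall x : Q, x != 0 -> x \is a GRing.unit.

Definition weyl (x : Q) : Prop :=
  exists (n : nat) (c : 'I_n -> 'I_n -> k),
    x = \sum_(i < n) \sum_(j < n) c i j *: (t ^+ i * d ^+ j).

(* Q_1 is the quotient division ring of the Weyl algebra A_1 = k[t,d]: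
   d t - t d = 1, the monomials t^i d^j are k-linearly independent
   (so the subalgebra generated by t, d is the Weyl algebra), Q is a
   division ring and every element of Q has the form a b^-1, a, b in A_1. *)
Definition weyl_quotient : Prop :=
  [/\ d * t - t * d = 1,
      (forall (n : nat) (c : 'I_n -> 'I_n -> k),
          \sum_(i < n) \sum_(j < n) c i j *: (t ^+ i * d ^+ j) = 0 ->
          forall i j, c i j = 0),
      division_ring &
      forall u : Q, exists a b, [/\ weyl a, weyl b, b != 0 & u = a * b^-1]].

Definition polyd (p : {poly k}) : Q := \sum_(i < size p) p`_i *: d ^+ i.

Definition kd (r : Q) : Prop :=
  exists p q : {poly k}, q != 0 /\ r = polyd p * (polyd q)^-1.

Definition tpoly_deg (x : Q) (n : nat) : Prop :=
  exists r : nat -> Q, [/\ forall i, kd (r i), r n != 0 &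
                           x = \sum_(i < n.+1) r i * t ^+ i].

Definition tdeg (u : Q) (m : int) : Prop :=
  exists a b (p q : nat),
    [/\ tpoly_deg a p, tpoly_deg b q, u = a * b^-1 & m = p%:Z - q%:Z].

Definition right_ideal (I : Q -> Prop) : Prop :=
  [/\ forall x, I x -> weyl x,
      I 0,
      forall x y, I x -> I y -> I (x + y) &
      forall x a, I x -> weyl a -> I (x * a)].

Definition dual (I : Q -> Prop) (u : Q) : Prop :=
  forall x, I x -> weyl (u * x).

Definition mindeg (S : Q -> Prop) (u : Q) : Prop :=
  [/\ S u, u != 0 &
      exists m, tdeg u m /\
        forall v n, S v -> v != 0 -> tdeg v n -> (m <= n)%R].

End Weyl.

(* Main.v *)
Require Import Defs.
From HB Require Import structures.
From mathcomp Require Import all_boot all_order all_algebra.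
From mathcomp Require Import zify.
From Stdlib Require Import Classical.
Set Implicit Arguments. Unset Strict Implicit. Unset Printing Implicit Defensive.
Import GRing.Theory.
Local Open Scope ring_scope.

Section S.
Variables (k : fieldType) (Q : unitAlgType k) (t d : Q).
Hypothesis char0 : [pchar k] =i pred0.
Hypothesis Hdt : d * t - t * d = 1.
Hypothesis Hind : forall (n : nat) (c : 'I_n -> 'I_n -> k),
          \sum_(i < n) \sum_(j < n) c i j *: (t ^+ i * d ^+ j) = 0 ->
          forall i j, c i j = 0.
Hypothesis Hdiv : division_ring Q.
Hypothesis Hfrac : forall u : Q, exists a b, [/\ weyl t d a, weyl t d b, b != 0 & u = a * b^-1].

Lemma polydE p : polyd d p = horner_alg d p.
Proof.
rewrite /horner_alg /horner_morph horner_coef /polyd size_map_poly.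
by apply: eq_bigr => i _; rewrite coef_map /= mulr_algl.
Qed.

Lemma polydD p q : polyd d (p + q) = polyd d p + polyd d q.
Proof. by rewrite !polydE rmorphD. Qed.
Lemma polydB p q : polyd d (p - q) = polyd d p - polyd d q.
Proof. by rewrite !polydE rmorphB. Qed.
Lemma polydM p q : polyd d (p * q) = polyd d p * polyd d q.
Proof. by rewrite !polydE rmorphM. Qed.
Lemma polyd1 : polyd d 1 = 1.
Proof. by rewrite !polydE rmorph1. Qed.
Lemma polyd0 : polyd d 0 = 0.
Proof. by rewrite !polydE rmorph0. Qed.
Lemma polydC c : polyd d c%:P = c%:A.
Proof. by rewrite polydE horner_algC. Qed.
Lemma polydX : polyd d 'X = d.
Proof. by rewrite polydE horner_algX. Qed.
Lemma polydZ c p : polyd d (c *: p) = c *: polyd d p.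
Proof. by rewrite -mul_polyC polydM polydC mulr_algl. Qed.

Lemma polyd_comm p q : polyd d p * polyd d q = polyd d q * polyd d p.
Proof. by rewrite -!polydM mulrC. Qed.
Lemma polyd_commd p : polyd d p * d = d * polyd d p.
Proof. by have := polyd_comm p 'X; rewrite polydX. Qed.

Lemma polyd_inj p : polyd d p = 0 -> p = 0.
Proof.
move=> H; apply/polyP => j; rewrite coef0.
case: (ltnP j (size p)) => hj; last by rewrite nth_default.
pose n := size p.
pose c := fun (i j : 'I_n) => if val i == 0%N then p`_j else 0.
have H0 : (0 < n)%N by apply: leq_ltn_trans hj.
have := @Hind n c _ (Ordinal H0) (Ordinal hj).
rewrite /c /=; apply; rewrite -[RHS]H.
rewrite (bigD1 (Ordinal H0)) //= [X in _ + X]big1 ?addr0.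
  by rewrite /polyd; apply: eq_bigr => i _; rewrite expr0 mul1r.
move=> i hi; apply: big1 => j' _.
have -> : (val i == 0%N) = false.
  by apply: contraNF hi => /eqP h; apply/eqP/val_inj.
by rewrite scale0r.
Qed.

Lemma unitQ (x : Q) : x != 0 -> x \is a GRing.unit.
Proof. exact: Hdiv. Qed.

Lemma mulQ_neq0 (x y : Q) : x != 0 -> y != 0 -> x * y != 0.
Proof.
move=> hx hy; apply/eqP => h; move/eqP: hy; apply.
by rewrite -(mulKr (unitQ hx) y) h mulr0.
Qed.

Lemma natQ_neq0 n : (0 < n)%N -> (n%:R : Q) != 0.
Proof.
move=> hn; apply/eqP => h.
have hk : (n%:R : k) != 0.
  by have /pcharf0P -> := char0; rewrite -lt0n.
have : (n%:R : k)^-1 *: (n%:R : Q) = 1.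
  by rewrite -scaler_nat scalerA mulVf // scale1r.
by rewrite h scaler0 => /esym/eqP; rewrite oner_eq0.
Qed.

Definition delta (x : Q) := d * x - x * d.
Definition deltan n x := iter n delta x.

Lemma deltaD x y : delta (x + y) = delta x + delta y.
Proof. by rewrite /delta mulrDr mulrDl opprD addrACA. Qed.
Lemma deltaN x : delta (- x) = - delta x.
Proof. by rewrite /delta mulrN mulNr opprB opprK addrC. Qed.
Lemma deltaB x y : delta (x - y) = delta x - delta y.
Proof. by rewrite deltaD deltaN. Qed.
Lemma delta0 : delta 0 = 0.
Proof. by rewrite /delta mulr0 mul0r subrr. Qed.
Lemma deltaM x y : delta (x * y) = delta x * y + x * delta y.
Proof.
rewrite /delta mulrBl mulrBr !mulrA.
by rewrite addrA subrK.
Qed.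
Lemma deltaZ c x : delta (c *: x) = c *: delta x.
Proof. by rewrite /delta scalerBr scalerAr scalerAl. Qed.

Lemma deltanD n x y : deltan n (x + y) = deltan n x + deltan n y.
Proof. by elim: n => //= n ->; rewrite deltaD. Qed.
Lemma deltanN n x : deltan n (- x) = - deltan n x.
Proof. by elim: n => //= n ->; rewrite deltaN. Qed.
Lemma deltanB n x y : deltan n (x - y) = deltan n x - deltan n y.
Proof. by rewrite deltanD deltanN. Qed.
Lemma deltan0 n : deltan n 0 = 0.
Proof. by elim: n => //= n ->; rewrite delta0. Qed.
Lemma deltanZ n c x : deltan n (c *: x) = c *: deltan n x.
Proof. by elim: n => //= n ->; rewrite deltaZ. Qed.
Lemma deltan_sum n m (F : 'I_m -> Q) :
  deltan n (\sum_(i < m) F i) = \sum_(i < m) deltan n (F i).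
Proof.
elim/big_rec2: _; first by rewrite deltan0.
by move=> i y1 y2 _ <-; rewrite deltanD.
Qed.
Lemma deltanS n x : deltan n.+1 x = deltan n (delta x).
Proof. by rewrite /deltan iterSr. Qed.
Lemma deltan_add n m x : deltan (n + m) x = deltan n (deltan m x).
Proof. by rewrite /deltan iterD. Qed.
Lemma deltan_zero n m x : deltan n x = 0 -> (n <= m)%N -> deltan m x = 0.
Proof.
move=> h /subnK <-; by rewrite deltan_add h deltan0.
Qed.

Lemma deltan_cl n c y : delta c = 0 -> deltan n (c * y) = c * deltan n y.
Proof.
move=> hc; elim: n => //= n ->; by rewrite deltaM hc mul0r add0r.
Qed.
Lemma deltan_cr n c y : delta c = 0 -> deltan n (y * c) = deltan n y * c.
Proof.
move=> hc; elim: n => //= n ->; by rewrite deltaM hc mulr0 addr0.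
Qed.

Lemma delta_polyd p : delta (polyd d p) = 0.
Proof. by rewrite /delta polyd_commd subrr. Qed.

Lemma delta_inv x : delta x = 0 -> delta x^-1 = 0.
Proof.
rewrite /delta => /eqP; rewrite subr_eq0 => /eqP h.
case: (boolP (x \is a GRing.unit)) => hx; last first.
  by rewrite (invr_out hx) h subrr.
apply/eqP; rewrite subr_eq0; apply/eqP.
by rewrite -{1}(mulKr hx d) -h -!mulrA mulrV // mulr1.
Qed.

Lemma deltan_mul n m x y :
  deltan n.+1 x = 0 -> deltan m.+1 y = 0 ->
  deltan (n + m).+1 (x * y) = 0 /\
  deltan (n + m) (x * y) = 'C(n + m, n)%:R * (deltan n x * deltan m y).
Proof.
elim: n m x y => [|n IHn] m x y hx hy.
  have hx' : delta x = 0 by [].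
  rewrite !add0n bin0 mul1r !deltan_cl //.
  by rewrite hy mulr0.
elim: m x y hx hy => [|m IHm] x y hx hy.
  have hy' : delta y = 0 by [].
  rewrite !addn0 binn mul1r !deltan_cr //.
  by rewrite hx mul0r.
have hdx : deltan n.+1 (delta x) = 0 by rewrite -deltanS.
have hdy : deltan m.+1 (delta y) = 0 by rewrite -deltanS.
have [A1 A2] := IHn m.+1 _ _ hdx hy.
have [B1 B2] := IHm _ _ hx hdy.
rewrite addSnnS in B1 B2.
rewrite (_ : n.+1 + m.+1 = (n + m.+1).+1)%N //.
split.
  by rewrite deltanS deltaM deltanD A1 B1 addr0.
rewrite deltanS deltaM deltanD.
rewrite A2 B2 -deltanS -deltanS -mulrDl -natrD.
by rewrite binS addnC.
Qed.

Definition dg x n := deltan n x != 0 /\ deltan n.+1 x = 0.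

Lemma dg_unique x n m : dg x n -> dg x m -> n = m.
Proof.
move=> [h1 h2] [h3 h4]; apply/eqP; rewrite eqn_leq; apply/andP; split.
  case: (leqP n m) => // hmn; case/eqP: h1; exact: deltan_zero h4 hmn.
case: (leqP m n) => // hmn; case/eqP: h3; exact: deltan_zero h2 hmn.
Qed.

Lemma dg_neq0 x n : dg x n -> x != 0.
Proof. by move=> [h _]; apply: contraNneq h => ->; rewrite deltan0. Qed.

Lemma dg_mul x y n m : dg x n -> dg y m -> dg (x * y) (n + m).
Proof.
move=> [h1 h2] [h3 h4]; have [A B] := deltan_mul h2 h4; split => //.
rewrite B; apply: mulQ_neq0; last exact: mulQ_neq0.
by apply: natQ_neq0; rewrite bin_gt0 leq_addr.
Qed.

Lemma delta_t : delta t = 1.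
Proof. by rewrite /delta. Qed.

Lemma deltan_t i : deltan i.+1 (t ^+ i) = 0 /\ deltan i (t ^+ i) = i`!%:R.
Proof.
elim: i => [|i [IH1 IH2]]; first by rewrite expr0 /= /delta mulr1 mul1r subrr.
have ht : deltan 2 t = 0 by rewrite /= delta_t /delta mulr1 mul1r subrr.
have := deltan_mul IH1 ht; rewrite addn1 exprSr => -[-> ->]; split => //.
by rewrite IH2 /= delta_t mulr1 binSn factS natrM.
Qed.

Lemma deltan_tpoly n (r : nat -> Q) : (forall i, delta (r i) = 0) ->
  deltan n.+1 (\sum_(i < n.+1) r i * t ^+ i) = 0 /\
  deltan n (\sum_(i < n.+1) r i * t ^+ i) = n`!%:R * r n.
Proof.
move=> hr; rewrite !deltan_sum; split.
  apply: big1 => i _; rewrite deltan_cl //.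
  by rewrite (deltan_zero (deltan_t i).1) ?mulr0 // ltnS.
rewrite big_ord_recr /= big1 ?add0r.
  by rewrite deltan_cl // (deltan_t n).2 mulr_natr mulr_natl.
move=> i _; rewrite deltan_cl //.
by rewrite (deltan_zero (deltan_t i).1) ?mulr0.
Qed.

Lemma kd_delta r : kd d r -> delta r = 0.
Proof.
move=> [p [q [_ ->]]]; rewrite deltaM delta_polyd delta_inv ?delta_polyd //.
by rewrite mul0r mulr0 addr0.
Qed.

Lemma tpoly_dg x n : tpoly_deg t d x n -> dg x n.
Proof.
move=> [r [hr hn ->]].
have hr' : forall i, delta (r i) = 0 by move=> i; apply: kd_delta.
have [A B] := deltan_tpoly n hr'; split => //.
rewrite B; apply: mulQ_neq0 => //; apply: natQ_neq0; exact: fact_gt0.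
Qed.

Lemma sum_pad n N (F : nat -> Q) : (n <= N)%N ->
  \sum_(i < n) F i = \sum_(i < N) (if (i < n)%N then F i else 0).
Proof. by move=> h; rewrite (big_ord_widen _ _ h) big_mkcond. Qed.

Definition weylN x := exists n (c : nat -> nat -> k),
  x = \sum_(i < n) \sum_(j < n) c i j *: (t ^+ i * d ^+ j).

Lemma weylP x : weyl t d x <-> weylN x.
Proof.
split.
  move=> [n [c ->]].
  exists n, (fun i j => match (insub i : option 'I_n), (insub j : option 'I_n) with
                       | Some i', Some j' => c i' j' | _, _ => 0 end).
  by apply: eq_bigr => i _; apply: eq_bigr => j _; rewrite !valK.
move=> [n [c ->]]; by exists n, (fun i j : 'I_n => c i j).
Qed.

Lemma weylN_pad n N (c : nat -> nat -> k) : (n <= N)%N ->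
  \sum_(i < n) \sum_(j < n) c i j *: (t ^+ i * d ^+ j) =
  \sum_(i < N) \sum_(j < N) (if (i < n)%N && (j < n)%N then c i j else 0)
     *: (t ^+ i * d ^+ j).
Proof.
move=> h; rewrite (sum_pad (fun i => \sum_(j < n) c i j *: (t ^+ i * d ^+ j)) h).
apply: eq_bigr => i _.
case: ltnP => hi /=.
  rewrite (sum_pad (fun j => c i j *: (t ^+ i * d ^+ j)) h).
  by apply: eq_bigr => j _; case: ltnP => //; rewrite scale0r.
by rewrite big1 // => j _; rewrite scale0r.
Qed.

Lemma weylN0 : weylN 0.
Proof. by exists 0%N, (fun _ _ => 0); rewrite big_ord0. Qed.

Lemma weylND x y : weylN x -> weylN y -> weylN (x + y).
Proof.
move=> [n1 [c1 ->]] [n2 [c2 ->]].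
exists (n1 + n2)%N, (fun i j => (if (i < n1)%N && (j < n1)%N then c1 i j else 0) +
                               (if (i < n2)%N && (j < n2)%N then c2 i j else 0)).
rewrite (weylN_pad _ (leq_addr n2 n1)) (weylN_pad _ (leq_addl n1 n2)).
rewrite -big_split; apply: eq_bigr => i _; rewrite -big_split.
by apply: eq_bigr => j _; rewrite scalerDl.
Qed.

Lemma weylNZ a x : weylN x -> weylN (a *: x).
Proof.
move=> [n [c ->]]; exists n, (fun i j => a * c i j).
rewrite scaler_sumr; apply: eq_bigr => i _; rewrite scaler_sumr.
by apply: eq_bigr => j _; rewrite scalerA.
Qed.

Lemma weylNN x : weylN x -> weylN (- x).
Proof. by move=> h; rewrite -scaleN1r; apply: weylNZ. Qed.
Lemma weylNB x y : weylN x -> weylN y -> weylN (x - y).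
Proof. by move=> h1 h2; apply: weylND => //; apply: weylNN. Qed.

Lemma weylN_sum m (F : 'I_m -> Q) : (forall i, weylN (F i)) ->
  weylN (\sum_(i < m) F i).
Proof.
move=> h; elim/big_rec: _; first exact: weylN0.
by move=> i x _ hx; apply: weylND.
Qed.

Lemma weylN_mono a b : weylN (t ^+ a * d ^+ b).
Proof.
exists (a + b).+1, (fun i j => if (i == a) && (j == b) then 1 else 0).
rewrite (eq_bigr (fun i : 'I_(a + b).+1 => if val i == a then
   \sum_(j < (a + b).+1) (if val j == b then 1 else 0) *: (t ^+ a * d ^+ j) else 0)).
  rewrite -big_mkcond (big_ord1_eq _ (fun _ => \sum_(j < (a + b).+1)
        (if val j == b then 1 else 0) *: (t ^+ a * d ^+ j))) ltnS leq_addr.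
  rewrite (eq_bigr (fun j : 'I_(a + b).+1 => if val j == b then
     (t ^+ a * d ^+ b) else 0)).
    by rewrite -big_mkcond (big_ord1_eq _ (fun _ => t ^+ a * d ^+ b)) ltnS leq_addl.
  by move=> j _; case: eqP => [->|_]; rewrite ?scale1r ?scale0r.
move=> i _; case: eqP => [->|_] /=; last first.
  by rewrite big1 // => j _; rewrite scale0r.
by apply: eq_bigr.
Qed.

Lemma weylN1 : weylN 1.
Proof. by have := weylN_mono 0 0; rewrite !expr0 mul1r. Qed.

Lemma delta_tpow i : delta (t ^+ i.+1) = t ^+ i *+ i.+1.
Proof.
elim: i => [|i IH]; first by rewrite expr1 delta_t expr0.
rewrite exprSr deltaM IH delta_t mulr1.
by rewrite mulrnAl -exprSr [RHS]mulrSr.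
Qed.

Lemma weylN_d y : weylN y -> weylN (d * y).
Proof.
move=> [n [c ->]]; rewrite mulr_sumr; apply: weylN_sum => i.
rewrite mulr_sumr; apply: weylN_sum => j.
rewrite -scalerAr; apply: weylNZ.
have -> : d * (t ^+ i * d ^+ j) = t ^+ i * d ^+ j.+1 + delta (t ^+ i) * d ^+ j.
  by rewrite /delta mulrBl -!mulrA -exprS addrC subrK mulrA.
apply: weylND; first exact: weylN_mono.
case: (val i) => [|i']; first by rewrite expr0 /delta mulr1 mul1r subrr mul0r; exact: weylN0.
rewrite delta_tpow mulrnAl -scaler_nat; apply: weylNZ; exact: weylN_mono.
Qed.

Lemma weylN_polydl p y : weylN y -> weylN (polyd d p * y).
Proof.
move=> hy; rewrite /polyd mulr_suml; apply: weylN_sum => i.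
rewrite -scalerAl; apply: weylNZ.
elim: (val i) => [|j IH]; first by rewrite expr0 mul1r.
by rewrite exprS -mulrA; apply: weylN_d.
Qed.

Lemma weylN_polyd p : weylN (polyd d p).
Proof. by rewrite -[polyd d p]mulr1; apply: weylN_polydl; exact: weylN1. Qed.

Definition LP x := exists n (r : nat -> {poly k}),
  x = \sum_(i < n) polyd d (r i) * t ^+ i.

Lemma LP_pad n N (r : nat -> {poly k}) : (n <= N)%N ->
  \sum_(i < n) polyd d (r i) * t ^+ i =
  \sum_(i < N) polyd d (if (i < n)%N then r i else 0) * t ^+ i.
Proof.
move=> h; rewrite (sum_pad (fun i => polyd d (r i) * t ^+ i) h).
by apply: eq_bigr => i _; case: ltnP => //; rewrite polyd0 mul0r.
Qed.

Lemma LP0 : LP 0.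
Proof. by exists 0%N, (fun _ => 0); rewrite big_ord0. Qed.

Lemma LPD x y : LP x -> LP y -> LP (x + y).
Proof.
move=> [n1 [r1 ->]] [n2 [r2 ->]].
exists (n1 + n2)%N, (fun i => (if (i < n1)%N then r1 i else 0) +
                               (if (i < n2)%N then r2 i else 0)).
rewrite (LP_pad _ (leq_addr n2 n1)) (LP_pad _ (leq_addl n1 n2)).
by rewrite -big_split; apply: eq_bigr => i _; rewrite polydD mulrDl.
Qed.

Lemma LPZ a x : LP x -> LP (a *: x).
Proof.
move=> [n [r ->]]; exists n, (fun i => a *: r i).
rewrite scaler_sumr; apply: eq_bigr => i _.
by rewrite polydZ scalerAl.
Qed.

Lemma LPB x y : LP x -> LP y -> LP (x - y).
Proof. by move=> h1 h2; apply: LPD => //; rewrite -scaleN1r; apply: LPZ. Qed.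

Lemma LP_sum m (F : 'I_m -> Q) : (forall i, LP (F i)) -> LP (\sum_(i < m) F i).
Proof.
move=> h; elim/big_rec: _; first exact: LP0.
by move=> i x _ hx; apply: LPD.
Qed.

Definition eps x := x * t - t * x.

Lemma eps_polyd p : eps (polyd d p) = polyd d p^`().
Proof.
elim/poly_ind: p => [|p c IH]; first by rewrite /eps deriv0 polyd0 mulr0 mul0r subrr.
rewrite derivMXaddC !polydD !polydM polydX polydC /eps.
rewrite /eps in IH.
have hc : c%:A * t = t * c%:A by rewrite mulr_algl mulr_algr.
rewrite mulrDl mulrDr hc opprD addrACA subrr addr0.
have e : polyd d p * d * t - t * (polyd d p * d) =
  polyd d p * (d * t - t * d) + (polyd d p * t - t * polyd d p) * d.
  by rewrite mulrBr mulrBl !mulrA addrA subrK.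
by rewrite e Hdt mulr1 IH.
Qed.

Lemma LP_t x : LP x -> LP (t * x).
Proof.
move=> [n [r ->]]; rewrite mulr_sumr.
have h : forall i : 'I_n, t * (polyd d (r i) * t ^+ i) =
   polyd d (r i) * t ^+ i.+1 - polyd d (r i)^`() * t ^+ i.
  move=> i; rewrite -eps_polyd /eps mulrA mulrBl -(mulrA _ t) -exprS opprB addrC subrK.
  done.
rewrite (eq_bigr _ (fun i _ => h i)) sumrB; apply: LPB.
  exists n.+1, (fun i => if i is j.+1 then r j else 0).
  by rewrite big_ord_recl /= polyd0 mul0r add0r.
by exists n, (fun i => (r i)^`()).
Qed.

Lemma polyd_Xn j : polyd d 'X^j = d ^+ j.
Proof. by rewrite polydE rmorphXn /= horner_algX. Qed.

Lemma LP_mono i j : LP (t ^+ i * d ^+ j).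
Proof.
elim: i => [|i IH].
  exists 1%N, (fun _ => 'X^j); rewrite big_ord1 expr0 mul1r mulr1.
  by rewrite polyd_Xn.
by rewrite exprS -mulrA; apply: LP_t.
Qed.

Lemma LP_weyl x : weyl t d x -> LP x.
Proof.
move/weylP=> [n [c ->]]; apply: LP_sum => i; apply: LP_sum => j.
apply: LPZ; exact: LP_mono.
Qed.

Lemma LP_top n (r : nat -> {poly k}) : \sum_(i < n) polyd d (r i) * t ^+ i != 0 ->
  exists m (r' : nat -> {poly k}), polyd d (r' m) != 0 /\
    \sum_(i < n) polyd d (r i) * t ^+ i = \sum_(i < m.+1) polyd d (r' i) * t ^+ i.
Proof.
elim: n => [|n IH]; first by rewrite big_ord0 eqxx.
rewrite big_ord_recr /=.
case: (eqVneq (polyd d (r n)) 0) => hn.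
  by rewrite hn mul0r addr0.
by move=> _; exists n, r; split => //; rewrite big_ord_recr.
Qed.

Lemma kd_polyd p : kd d (polyd d p).
Proof.
by exists p, 1; split; [exact: oner_neq0 | rewrite polyd1 invr1 mulr1].
Qed.

Lemma weyl_deg x : weyl t d x -> x != 0 ->
  exists m, [/\ tpoly_deg t d x m, dg x m &
    exists h, h != 0 /\ deltan m x = m`!%:R * polyd d h].
Proof.
move=> /LP_weyl [n [r ex]] hx; rewrite ex in hx.
have [m [r' [hm e]]] := LP_top hx.
rewrite e in ex.
have hr : forall i, delta (polyd d (r' i)) = 0 by move=> i; exact: delta_polyd.
have T : tpoly_deg t d x m.
  by exists (fun i => polyd d (r' i)); split => // i; exact: kd_polyd.
exists m; split => //; first exact: tpoly_dg.
exists (r' m); split.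
  by apply: contraNneq hm => ->; rewrite polyd0.
by rewrite ex; have [_ ->] := deltan_tpoly m hr.
Qed.

Lemma tdeg_dg u m : tdeg t d u m -> exists a b p q,
  [/\ dg a p, dg b q, u = a * b^-1 & m = p%:Z - q%:Z].
Proof.
move=> [a [b [p [q [ha hb eu em]]]]]; exists a, b, p, q; split => //;
  exact: tpoly_dg.
Qed.

Lemma tdeg_unique u m1 m2 : tdeg t d u m1 -> tdeg t d u m2 -> m1 = m2.
Proof.
move=> /tdeg_dg [a [b [p [q [ha hb eu ->]]]]].
move=> /tdeg_dg [a' [b' [p' [q' [ha' hb' eu' ->]]]]].
have ub := unitQ (dg_neq0 hb); have ub' := unitQ (dg_neq0 hb').
have [X [Y [wX wY nY e]]] := Hfrac (b'^-1 * b).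
have e1 : b * Y = b' * X.
  have -> : b = b' * (X * Y^-1) by rewrite -e mulVKr.
  by rewrite -mulrA mulrVK ?unitQ.
have nX : X != 0.
  apply/eqP => hX; move: e1; rewrite hX mulr0; apply/eqP.
  exact: mulQ_neq0 (dg_neq0 hb) nY.
have e2 : a * Y = a' * X.
  have -> : a = u * b by rewrite eu mulrVK.
  have -> : a' = u * b' by rewrite eu' mulrVK.
  by rewrite -!mulrA e1.
have [x [_ hX _]] := weyl_deg wX nX.
have [y [_ hY _]] := weyl_deg wY nY.
have E1 := dg_unique (dg_mul hb hY) (eq_ind_r (fun z => dg z _) (dg_mul hb' hX) e1).
have E2 := dg_unique (dg_mul ha hY) (eq_ind_r (fun z => dg z _) (dg_mul ha' hX) e2).
lia.
Qed.

Lemma tpoly1 : tpoly_deg t d 1 0.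
Proof.
exists (fun _ => 1); split => //; last by rewrite big_ord1 expr0 mulr1.
  by move=> _; rewrite -polyd1; exact: kd_polyd.
exact: oner_neq0.
Qed.

Lemma weyl_tdeg x : weyl t d x -> x != 0 ->
  exists m, [/\ dg x m, tdeg t d x m%:Z &
    exists h, h != 0 /\ deltan m x = m`!%:R * polyd d h].
Proof.
move=> wx nx; have [m [T D H]] := weyl_deg wx nx; exists m; split => //.
exists x, 1, m, 0%N; split => //; first exact: tpoly1.
  by rewrite invr1 mulr1.
by rewrite subr0.
Qed.

Lemma tdeg_frac u x w m n : u * x = w -> weyl t d x -> weyl t d w ->
  x != 0 -> w != 0 -> dg x n -> dg w m -> tdeg t d u (m%:Z - n%:Z).
Proof.
move=> e wx ww nx nw hx hw.
have [m' [T1 D1 _]] := weyl_deg ww nw.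
have [n' [T2 D2 _]] := weyl_deg wx nx.
rewrite (dg_unique hx D2) (dg_unique hw D1).
exists w, x, m', n'; split => //.
by rewrite -e mulrK // unitQ.
Qed.

Lemma ex_min_nat (P : nat -> Prop) : (exists n, P n) ->
  exists n, P n /\ forall j, P j -> (n <= j)%N.
Proof.
move=> [n hn]; elim/ltn_ind: n hn => n IH hn.
case: (classic (exists j, P j /\ (j < n)%N)) => [[j [hj hjn]]|h].
  exact: IH j hjn hj.
exists n; split => // j hj; rewrite leqNgt; apply/negP => hjn; apply: h.
by exists j.
Qed.

Definition act (s : bool) p v := if s then v * polyd d p else polyd d p * v.

Lemma act_deltan s j p v : deltan j (act s p v) = act s p (deltan j v).
Proof.
by case: s; rewrite /act; [apply: deltan_cr | apply: deltan_cl]; exact: delta_polyd.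
Qed.

Lemma act_lead s n p h : act s p (n%:R * polyd d h) = n%:R * polyd d (p * h).
Proof.
case: s; rewrite /act polydM.
  by rewrite -mulrA polyd_comm.
by rewrite mulr_natl mulrnAr -mulr_natl.
Qed.

Lemma act0 s v : act s 0 v = 0.
Proof. by case: s; rewrite /act polyd0 ?mulr0 ?mul0r. Qed.
Lemma actv0 s p : act s p 0 = 0.
Proof. by case: s; rewrite /act ?mulr0 ?mul0r. Qed.

Lemma lead_neq0 m h : h != 0 -> m`!%:R * polyd d h != 0.
Proof.
move=> hh; apply: mulQ_neq0; first by apply: natQ_neq0; exact: fact_gt0.
by apply: contraNneq hh => /polyd_inj ->.
Qed.

Lemma Gen (s : bool) (S : Q -> Prop) :
  (forall v, S v -> weyl t d v) ->
  (forall v w, S v -> S w -> S (v - w)) ->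
  (forall p v, S v -> S (act s p v)) ->
  (exists v, S v /\ v != 0) ->
  exists f m, [/\ S f, f != 0,
    (forall v n, S v -> v != 0 -> dg v n -> (m <= n)%N),
    (forall p, p != 0 -> dg (act s p f) m) &
    (forall v, S v -> v != 0 -> dg v m -> exists p, v = act s p f)].
Proof.
move=> SW SB SA [v0 [Sv0 nv0]].
have degS : forall v, S v -> v != 0 -> exists n, dg v n.
  by move=> v Sv nv; have [n [? _ _]] := weyl_tdeg (SW _ Sv) nv; exists n.
have [m [[v1 [Sv1 [nv1 dv1]]] hmin]] :
  exists m : nat, (exists v, S v /\ v != 0 /\ dg v m) /\
   forall j, (exists v, S v /\ v != 0 /\ dg v j) -> (m <= j)%N.
  apply: ex_min_nat; have [n hn] := degS _ Sv0 nv0; by exists n, v0.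
have hmin' : forall v n, S v -> v != 0 -> dg v n -> (m <= n)%N.
  by move=> v n Sv nv dv; apply: hmin; exists v.
have lead : forall v, S v -> v != 0 -> dg v m ->
    exists h, h != 0 /\ deltan m v = m`!%:R * polyd d h.
  move=> v Sv nv dv; have [m' [dv' _ [h [nh eh]]]] := weyl_tdeg (SW _ Sv) nv.
  by rewrite (dg_unique dv dv'); exists h.
have [sz [[g [f [ng [esz [Sf [df ef]]]]]] hsz]] :
  exists sz : nat, (exists (h : {poly k}) v, h != 0 /\ size h = sz /\ S v /\ dg v m /\
                 deltan m v = m`!%:R * polyd d h) /\
   forall j, (exists (h : {poly k}) v, h != 0 /\ size h = j /\ S v /\ dg v m /\
                 deltan m v = m`!%:R * polyd d h) -> (sz <= j)%N.
  apply: ex_min_nat; have [h [nh eh]] := lead _ Sv1 nv1 dv1.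
  by exists (size h), h, v1.
have actd : forall p, p != 0 -> dg (act s p f) m.
  move=> p np; split.
    rewrite act_deltan ef act_lead; apply: lead_neq0; exact: mulf_neq0.
  by rewrite act_deltan (proj2 df) actv0.
exists f, m; split => //; first exact: dg_neq0 df.
move=> v Sv nv dv; have [h [nh eh]] := lead _ Sv nv dv.
pose q := h %/ g; pose rr := h %% g.
have erem : h - q * g = rr by rewrite /q /rr {1}(divp_eq h g) addrAC subrr add0r.
pose w := v - act s q f.
have Sw : S w by apply: SB => //; exact: SA.
have ew : deltan m w = m`!%:R * polyd d rr.
  rewrite /w deltanB act_deltan ef act_lead eh -mulrBr -polydB.
  by rewrite -erem.
have ew1 : deltan m.+1 w = 0.
  by rewrite /w deltanB act_deltan (proj2 df) (proj2 dv) actv0 subr0.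
case: (eqVneq rr 0) => hrr.
  exists q; apply/eqP; rewrite -subr_eq0; apply/eqP; change (w = 0).
  case: (eqVneq w 0) => // nw; exfalso.
  have [n dw] := degS _ Sw nw.
  have := hmin' _ _ Sw nw dw => hmn.
  move: dw => [+ _]; rewrite (deltan_zero _ hmn) ?eqxx //.
  by rewrite ew hrr polyd0 mulr0.
exfalso.
have : (sz <= size rr)%N.
  apply: hsz; exists rr, w; do !split => //.
  by rewrite ew; apply: lead_neq0.
rewrite leqNgt; move/negP; apply.
by rewrite /rr -esz ltn_modp.
Qed.


Lemma act_act s p q v : act s p (act s q v) = act s (p * q) v.
Proof.
case: s; rewrite /act polydM.
  by rewrite -mulrA polyd_comm.
by rewrite mulrA.
Qed.
Lemma act1 s v : act s 1 v = v.
Proof. by case: s; rewrite /act polyd1 ?mulr1 ?mul1r. Qed.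
Lemma actC s c v : act s c%:P v = c *: v.
Proof. by case: s; rewrite /act polydC ?mulr_algr ?mulr_algl. Qed.
Lemma actB s p q v : act s (p - q) v = act s p v - act s q v.
Proof. by case: s; rewrite /act polydB ?mulrBr ?mulrBl. Qed.

Lemma uniq_gen s (P : Q -> Prop) f g :
  (forall u, P u <-> exists p, u = act s p f) ->
  (forall u, P u <-> exists p, u = act s p g) -> f != 0 ->
  exists c, c != 0 /\ g = c *: f.
Proof.
move=> Hf Hg nf.
have [p1 e1] : exists p, f = act s p g by apply/Hg/Hf; exists 1; rewrite act1.
have [p2 e2] : exists p, g = act s p f by apply/Hf/Hg; exists 1; rewrite act1.
have e3 : act s (p1 * p2 - 1) f = 0.
  by rewrite actB act1 -act_act -e2 -e1 subrr.
have e4 : polyd d (p1 * p2 - 1) = 0.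
  have uf := unitQ nf.
  destruct s; rewrite /act in e3.
    by rewrite -(mulKr uf (polyd d _)) e3 mulr0.
  by rewrite -(mulrK uf (polyd d _)) e3 mul0r.
have e5 : p1 * p2 = 1 by apply/eqP; rewrite -subr_eq0; apply/eqP/polyd_inj.
have u2 : p2 \is a GRing.unit by apply/unitrPr; exists p1; rewrite mulrC.
move: u2; rewrite poly_unitE => /andP[/eqP s2 u0].
exists p2`_0; split; first by rewrite unitfE in u0.
by rewrite e2 {1}(size1_polyC (eq_leq s2)) actC.
Qed.


Lemma part1 I : right_ideal t d I -> (exists x, I x /\ x != 0) ->
  exists f : Q,
      (I f /\ forall u, (u = 0 \/ mindeg t d I u) <->
                         exists p : {poly k}, u = f * polyd d p)
      /\ forall g : Q,
           (I g /\ forall u, (u = 0 \/ mindeg t d I u) <->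
                              exists p : {poly k}, u = g * polyd d p) ->
           exists c : k, c != 0 /\ g = c *: f.
Proof.
move=> [IW I0 ID IM] [x0 [Ix0 nx0]].
have SB : forall v w, I v -> I w -> I (v - w).
  move=> v w Iv Iw; rewrite -mulrN1; apply: ID => //; apply: IM => //.
  by apply/weylP/weylNN/weylN1.
have SA : forall p v, I v -> I (act true p v).
  by move=> p v Iv; apply: IM => //; apply/weylP/weylN_polyd.
have [f [m [If nf hmin actd hcyc]]] := Gen IW SB SA (ex_intro _ x0 (conj Ix0 nx0)).
have df : dg f m by have := actd 1 (oner_neq0 _); rewrite act1.
have tdI : forall v z, I v -> v != 0 -> tdeg t d v z ->
    exists n, dg v n /\ z = n%:Z.
  move=> v z Iv nv tv; have [n [dv tn _]] := weyl_tdeg (IW _ Iv) nv.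
  by exists n; split => //; exact: tdeg_unique tv tn.
have char : forall u, (u = 0 \/ mindeg t d I u) <-> exists p, u = act true p f.
  move=> u; split.
    case=> [->|[Iu nu [z [tz hz]]]]; first by exists 0; rewrite act0.
    have [n [du ez]] := tdI _ _ Iu nu tz.
    have [nf' [df' tf _]] := weyl_tdeg (IW _ If) nf.
    have := hz _ _ If nf tf; rewrite ez lez_nat (dg_unique df' df) => hle.
    have hge := hmin _ _ Iu nu du.
    have enm : n = m by apply/eqP; rewrite eqn_leq hle hge.
    by apply: hcyc => //; rewrite -enm.
  move=> [p ->]; case: (eqVneq p 0) => [->|np]; first by left; rewrite act0.
  right; have dp := actd p np; split; first exact: SA.
    exact: dg_neq0 dp.
  have [n [dn tn _]] := weyl_tdeg (IW _ (SA p f If)) (dg_neq0 dp).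
  rewrite (dg_unique dn dp) in tn.
  exists m%:Z; split => // v z Iv nv tv.
  have [n' [dv ->]] := tdI _ _ Iv nv tv; rewrite lez_nat; exact: hmin _ _ Iv nv dv.
exists f; split; first by split.
by move=> g [Ig Hg]; exact: uniq_gen char Hg nf.
Qed.

Lemma part2 I : right_ideal t d I -> (exists x, I x /\ x != 0) ->
  exists e : Q,
      (dual t d I e /\ forall u, (u = 0 \/ mindeg t d (dual t d I) u) <->
                                  exists p : {poly k}, u = polyd d p * e)
      /\ forall g : Q,
           (dual t d I g /\ forall u, (u = 0 \/ mindeg t d (dual t d I) u) <->
                                       exists p : {poly k}, u = polyd d p * g) ->
           exists c : k, c != 0 /\ g = c *: e.
Proof.
move=> [IW I0 ID IM] [x0 [Ix0 nx0]].
pose D := dual t d I.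
pose S w := exists u, D u /\ w = u * x0.
have DB : forall u u', D u -> D u' -> D (u - u').
  move=> u u' Du Du' x Ix; rewrite mulrBl; apply/weylP.
  by apply: weylNB; apply/weylP; [apply: Du | apply: Du'].
have DA : forall p u, D u -> D (polyd d p * u).
  move=> p u Du x Ix; rewrite -mulrA; apply/weylP/weylN_polydl/weylP; exact: Du.
have SW : forall w, S w -> weyl t d w by move=> w [u [Du ->]]; exact: Du.
have SB : forall v w, S v -> S w -> S (v - w).
  move=> v w [u [Du ->]] [u' [Du' ->]]; exists (u - u'); split; last by rewrite mulrBl.
  exact: DB.
have SA : forall p v, S v -> S (act false p v).
  move=> p v [u [Du ->]]; exists (polyd d p * u); split; last by rewrite /act mulrA.
  exact: DA.
have D1 : D 1 by move=> x Ix; rewrite mul1r; exact: IW.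
have [f' [m [[e [De ef]] nf hmin actd hcyc]]] :=
  Gen SW SB SA (ex_intro _ x0 (conj (ex_intro _ 1 (conj D1 (esym (mul1r x0)))) nx0)).
have df : dg f' m by have := actd 1 (oner_neq0 _); rewrite act1.
have ux0 := unitQ nx0.
have [n0 [dx0 _ _]] := weyl_tdeg (IW _ Ix0) nx0.
have Dnz : forall u, u != 0 -> u * x0 != 0 by move=> u nu; exact: mulQ_neq0.
have tdD : forall u z, D u -> u != 0 -> tdeg t d u z ->
    exists n, dg (u * x0) n /\ z = n%:Z - n0%:Z.
  move=> u z Du nu tu.
  have [n [du _ _]] := weyl_tdeg (Du _ Ix0) (Dnz _ nu).
  exists n; split => //; apply: tdeg_unique tu _.
  exact: tdeg_frac (IW _ Ix0) (Du _ Ix0) nx0 (Dnz _ nu) dx0 du.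
have ne : e != 0 by apply: contraNneq nf => he; rewrite ef he mul0r.
have te : tdeg t d e (m%:Z - n0%:Z).
  by apply: tdeg_frac (IW _ Ix0) (De _ Ix0) nx0 (Dnz _ ne) dx0 _; rewrite -ef.
have char : forall u, (u = 0 \/ mindeg t d D u) <-> exists p, u = act false p e.
  move=> u; split.
    case=> [->|[Du nu [z [tz hz]]]]; first by exists 0; rewrite act0.
    have [n [du ez]] := tdD _ _ Du nu tz.
    have := hz _ _ De ne te; rewrite ez => hle.
    have hle' : (n <= m)%N by lia.
    have hge := hmin (u * x0) n (ex_intro _ u (conj Du erefl)) (Dnz _ nu) du.
    have enm : n = m by apply/eqP; rewrite eqn_leq hle' hge.
    rewrite enm in du.
    have [p ep] := hcyc _ (ex_intro _ u (conj Du erefl)) (Dnz _ nu) du.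
    exists p; apply: (mulIr ux0); by rewrite ep ef /act mulrA.
  move=> [p ->]; case: (eqVneq p 0) => [->|np]; first by left; rewrite act0.
  right; have dp := actd p np.
  have eq1 : act false p f' = act false p e * x0 by rewrite ef /act mulrA.
  have nu : act false p e != 0.
    by apply: contraTneq (dg_neq0 dp) => h; rewrite eq1 h mul0r eqxx.
  split; first exact: DA.
    exact: nu.
  exists (m%:Z - n0%:Z); split.
    have Sf : S f' by exists e.
    exact: (tdeg_frac (esym eq1) (IW _ Ix0) (SW _ (SA p _ Sf)) nx0 (dg_neq0 dp) dx0 dp).
  move=> v z Dv nv tv; have [n' [dv ->]] := tdD _ _ Dv nv tv.
  have := hmin _ _ (ex_intro _ v (conj Dv erefl)) (Dnz _ nv) dv => h.
  lia.
exists e; split; first by split.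
by move=> g [Dg Hg]; exact: uniq_gen char Hg ne.
Qed.
End S.

Unset Implicit Arguments.
Set Strict Implicit.

Theorem corollary2 (k : fieldType) (Q : unitAlgType k) (t d : Q)
    (I : Q -> Prop) :
  [pchar k] =i pred0 ->
  weyl_quotient t d ->
  right_ideal t d I ->
  (exists x, I x /\ x != 0) ->
  (exists f : Q,
      (I f /\ forall u, (u = 0 \/ mindeg t d I u) <->
                         exists p : {poly k}, u = f * polyd d p)
      /\ forall g : Q,
           (I g /\ forall u, (u = 0 \/ mindeg t d I u) <->
                              exists p : {poly k}, u = g * polyd d p) ->
           exists c : k, c != 0 /\ g = c *: f)
  /\
  (exists e : Q,
      (dual t d I e /\ forall u, (u = 0 \/ mindeg t d (dual t d I) u) <->
                                  exists p : {poly k}, u = polyd d p * e)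
      /\ forall g : Q,
           (dual t d I g /\ forall u, (u = 0 \/ mindeg t d (dual t d I) u) <->
                                       exists p : {poly k}, u = polyd d p * g) ->
           exists c : k, c != 0 /\ g = c *: e).
Proof.
move=> ch [Hdt Hind Hdiv Hfrac] HI Hne; split.
  by move: (part1 ch Hdt Hind Hdiv Hfrac HI Hne).
by move: (part2 ch Hdt Hind Hdiv Hfrac HI Hne).
Qed.
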